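(* Let $\mathcal{A}$ be a (finite) activation algebra and $M$ a finite set of morphisms of $\mathcal{T}_\mathcal{A}$. For every $\tau\in M^\omega$: there exists an accepting Safra board run of $\tau$ if and only if $\tau$ describes a path through $\mathcal{T}_\mathcal{A}$ which satisfies the trace condition.
   Context: An activation algebra $\mathcal{A}=(A,\le,\vee,0,\alpha)$ is a finite join-semilattice $(A,\le,\vee)$ with least element $0$, together with a distinguished element $\alpha\in A$ with $\alpha\neq 0$. The category $\mathcal{T}_\mathcal{A}$ has the finite sets as objects; a morphism $R\colon X\to Y$ is a relation $R\subseteq X\times A\times Y$; the composite of $R\colon X\to Y$ and $R'\colon Y\to Z$ is $R'\circ R=\{(x,c,z)\mid \exists y\in Y,\ a,b\in A:\ (x,a,y)\in R,\ (y,b,z)\in R',\ a\vee b=c\}$, and the identity is $1_X=\{(x,0,x)\mid x\in X\}$. A sequence $\tau\in M^\omega$ of morphisms describes a path if $\mathrm{cod}(\tau_i)=\mathrm{dom}(\tau_{i+1})$ for all $i$; write $P(n<m)=\tau_{m-1}\circ\cdots\circ\tau_n$ for $n<m$. Such a path satisfies the trace condition if there exist a strictly increasing sequence $k_0<k_1<\cdots$ of natural numbers and elements $s_i\in\mathrm{dom}(\tau_{k_i})$ with $(s_i,\alpha,s_{i+1})\in P(k_i<k_{i+1})$ for all $i$. Safra boards. Fix a countable set $\mathcal{C}\supseteq\omega$ of chips. A Safra board on $\mathcal{A}$ and a finite set $X$ is a pair $(\Theta,\sigma)$ where the control $\Theta\subseteq\mathcal{C}$ is a finite set with a linear order $\le$,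 and $\sigma\colon X\times A\to\mathcal{P}(\mathcal{P}(\Theta))$, such that every $\gamma\in\Theta$ belongs to some $S\in\sigma(x,a)$. The elements $S\in\sigma(x,a)$ are called stacks (bottom = $\le$-least, top = $\le$-greatest element). A chip $\gamma\in\Theta$ is covered if it is not the top element of any stack $S\in\sigma(x,a)$, for any $x,a$. Transitions between boards: (i) $\tau$-successor, for $\tau\colon X\to Y$, written $(\Theta,\sigma)\xrightarrow{\tau}(\Theta',\sigma')$: first let $\sigma^*(y,a)=\{S\mid S\in\sigma(x,b)\text{ for some }x\in X,b\in A, c\in A \text{ with }(x,c,y)\in\tau\text{ and }a=b\vee c\}$ and let $\Theta^*$ be the set of chips occurring in some stack of $\sigma^*$, with the order inherited from $\Theta$. Then choose a finite linearly ordered $\Theta^\circ\subseteq\mathcal{C}\setminus\Theta$ and a bijection $\iota$ from $\{y\in Y\mid\sigma^*(y,\alpha)\neq\emptyset\}$ onto $\Theta^\circ$, and set $\sigma'(y,\alpha)=\emptyset$, $\sigma'(y,0)=\sigma^*(y,0)\cup\{S\cup\{\iota(y)\}\mid S\in\sigma^*(y,\alpha)\}$, $\sigma'(y,a)=\sigma^*(y,a)$ for $a\notin\{0,\alpha\}$, and $\Theta'=\Theta^*\oplus\Theta^\circ$ (concatenation: all elements of $\Theta^*$ below all elements of $\Theta^\circ$). (ii) Weakening $(\Theta,\sigma)\xrightarrow{W}(\Theta',\sigma')$: a board on the same set with $\sigma'(x,a)\subseteq\sigma(x,a)$ for all $x,a$ and $\Theta'\subseteq\Theta$ (induced order) the set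 of chips still occurring in stacks of $\sigma'$. (iii) $\gamma$-reset for a covered $\gamma\in\Theta$, $(\Theta,\sigma)\xrightarrow{R_\gamma}(\Theta',\sigma')$: for a stack $S$ let $S{\upharpoonright}\gamma=\{z\in S\mid z\le\gamma\}$ if $\gamma\in S$ and $S{\upharpoonright}\gamma=S$ otherwise; $\sigma'(x,a)=\{S{\upharpoonright}\gamma\mid S\in\sigma(x,a)\}$, and $\Theta'$ is the set of chips occurring in stacks of $\sigma'$. (iv) Population $(\Theta,\sigma)\xrightarrow{P}(\Theta,\sigma')$: $\sigma(x,0)\subseteq\sigma'(x,0)\subseteq\sigma(x,0)\cup\{\emptyset\}$ for all $x$ and $\sigma'(x,a)=\sigma(x,a)$ for $a\neq 0$. A run of $\tau\in M^\omega$ is a sequence $(\Theta_i,\sigma_i)_{i\in\omega}$ of boards together with a strictly monotone $\iota\colon\omega\to\omega$ such that for $i=\iota(n)$ one has $(\Theta_i,\sigma_i)\xrightarrow{\tau_n}(\Theta_{i+1},\sigma_{i+1})$, and for $i$ not in the image of $\iota$ the step $(\Theta_i,\sigma_i)\to(\Theta_{i+1},\sigma_{i+1})$ is a weakening, a population, or a $\gamma$-reset for some $\gamma\in\Theta_i$. A run is accepting if there are $N\in\omega$ and $\gamma\in\bigcap_{n\ge N}\Theta_n$ such that the step from index $i$ to $i+1$ is a $\gamma$-reset for infinitely many $i$. *)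

(* Defs.v *)
From HB Require Import structures.
From mathcomp Require Import all_boot all_order.
From mathcomp Require Export finmap.
Set Implicit Arguments. Unset Strict Implicit. Unset Printing Implicit Defensive.
Local Open Scope fset_scope.

Section ActivationAlgebra.
Context {disp : Order.disp_t} (A : finTBLatticeType disp) (U : choiceType).

(* Objects of T_A: finite sets {fset U} of an arbitrary universe U.
   A morphism R : X -> Y is the triple (X, R, Y) with R a finite set of
   triples (x, a, y); [wf_mor] says R is contained in X x A x Y. *)
Definition mor := ({fset U} * {fset (U * A * U)} * {fset U})%type.
Definition mdom (m : mor) : {fset U} := m.1.1.
Definition mrel (m : mor) : {fset (U * A * U)} := m.1.2.
Definition mcod (m : mor) : {fset U} := m.2.
Definition wf_mor (m : mor) : Prop :=
  forall x a y, (x, a, y) \in mrel m -> x \in mdom m /\ y \in mcod m.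

(* pathrel tau n k = the relation of tau_(n+k) o ... o tau_n, composed
   with the composition of T_A. *)
Fixpoint pathrel (tau : nat -> mor) (n k : nat) : U -> A -> U -> Prop :=
  match k with
  | 0 => fun x c z => (x, c, z) \in mrel (tau n)
  | k'.+1 => fun x c z => exists y a b,
      pathrel tau n k' x a y /\ (y, b, z) \in mrel (tau (n + k'.+1)%N)
      /\ c = Order.join a b
  end.

(* P(n < m) = tau_(m-1) o ... o tau_n   (meaningful for n < m) *)
Definition Pcomp (tau : nat -> mor) (n m : nat) : U -> A -> U -> Prop :=
  pathrel tau n (m - n).-1.

Definition describes_path (tau : nat -> mor) : Prop :=
  forall i, mcod (tau i) = mdom (tau i.+1).

Definition trace_condition (alpha : A) (tau : nat -> mor) : Prop :=
  exists (k : nat -> nat) (s : nat -> U),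
    (forall i, k i < k i.+1) /\
    (forall i, s i \in mdom (tau (k i))) /\
    (forall i, Pcomp tau (k i) (k i.+1) (s i) alpha (s i.+1)).

Context (alpha : A) (C : countType).

(* A board (Theta, sigma): the linearly ordered finite control Theta is a
   duplicate-free list (order = position in the list); sigma x a is a
   finite set of stacks, a stack being a finite set of chips. *)
Definition board := (seq C * (U -> A -> {fset {fset C}}))%type.

Definition occursP (P : U -> A -> {fset C} -> Prop) (g : C) : Prop :=
  exists x a S, P x a S /\ g \in S.
Definition occurs (s : U -> A -> {fset {fset C}}) (g : C) : Prop :=
  occursP (fun x a S => S \in s x a) g.

Definition is_board (X : {fset U}) (b : board) : Prop :=
  uniq b.1 /\
  (forall x a, x \notin X -> b.2 x a = fset0) /\
  (forall x a S, S \in b.2 x a -> forall g, g \in S -> g \in b.1) /\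
  (forall g, g \in b.1 -> occurs b.2 g).

Definition induced (Th Th' : seq C) (P : C -> Prop) : Prop :=
  subseq Th' Th /\ forall g, g \in Th' <-> P g.

Definition sstar (s : U -> A -> {fset {fset C}}) (t : mor) (y : U) (a : A)
  (S : {fset C}) : Prop :=
  exists x b c, S \in s x b /\ (x, c, y) \in mrel t /\ a = Order.join b c.

Definition succ_step (t : mor) (b b' : board) : Prop :=
  let D := fun y => y \in mcod t /\ exists S, sstar b.2 t y alpha S in
  exists (Thstar Tho : seq C) (iota : U -> C),
    induced b.1 Thstar (occursP (sstar b.2 t)) /\
    uniq Tho /\ (forall g, g \in Tho -> g \notin b.1) /\
    (forall y, D y -> iota y \in Tho) /\
    (forall y y', D y -> D y' -> iota y = iota y' -> y = y') /\
    (forall g, g \in Tho -> exists y, D y /\ iota y = g) /\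
    b'.1 = Thstar ++ Tho /\
    (forall y, b'.2 y alpha = fset0) /\
    (forall y S, S \in b'.2 y Order.bottom <->
        (sstar b.2 t y Order.bottom S \/
         exists S0, sstar b.2 t y alpha S0 /\ S = S0 `|` [fset iota y])) /\
    (forall y a S, a <> Order.bottom -> a <> alpha ->
        (S \in b'.2 y a <-> sstar b.2 t y a S)).

Definition weak_step (b b' : board) : Prop :=
  (forall x a, b'.2 x a `<=` b.2 x a) /\ induced b.1 b'.1 (occurs b'.2).

Definition is_top (Th : seq C) (g : C) (S : {fset C}) : Prop :=
  g \in S /\ forall z, z \in S -> (index z Th <= index g Th)%N.
Definition covered (b : board) (g : C) : Prop :=
  forall x a S, S \in b.2 x a -> ~ is_top b.1 g S.
Definition trunc (Th : seq C) (g : C) (S : {fset C}) : {fset C} :=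
  if g \in S then [fset z in S | (index z Th <= index g Th)%N] else S.
Definition reset_step (g : C) (b b' : board) : Prop :=
  g \in b.1 /\ covered b g /\
  (forall x a, b'.2 x a = [fset trunc b.1 g S | S in b.2 x a]) /\
  induced b.1 b'.1 (occurs b'.2).

Definition pop_step (b b' : board) : Prop :=
  b'.1 = b.1 /\
  (forall x, b.2 x Order.bottom `<=` b'.2 x Order.bottom /\
             b'.2 x Order.bottom `<=` b.2 x Order.bottom `|` [fset fset0]) /\
  (forall x a, a <> Order.bottom -> b'.2 x a = b.2 x a).

(* A run of tau: boards b i, each a board on the set Xs i, with the
   strictly monotone io marking the tau-steps. *)
Definition is_run (tau : nat -> mor) (b : nat -> board) (io : nat -> nat)
  (Xs : nat -> {fset U}) : Prop :=
  (forall n, io n < io n.+1) /\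
  (forall i, is_board (Xs i) (b i)) /\
  (forall n, Xs (io n) = mdom (tau n) /\ Xs (io n).+1 = mcod (tau n) /\
             succ_step (tau n) (b (io n)) (b (io n).+1)) /\
  (forall i, (forall n, io n <> i) ->
     Xs i.+1 = Xs i /\
     (weak_step (b i) (b i.+1) \/ pop_step (b i) (b i.+1) \/
      exists g, g \in (b i).1 /\ reset_step g (b i) (b i.+1))).

Definition accepting (b : nat -> board) (io : nat -> nat) : Prop :=
  exists (N : nat) (g : C),
    (forall n, N <= n -> g \in (b n).1) /\
    (forall m, exists i, m <= i /\ (forall n, io n <> i) /\
                         reset_step g (b i) (b i.+1)).

Definition has_accepting_run (tau : nat -> mor) : Prop :=
  exists (b : nat -> board) (io : nat -> nat) (Xs : nat -> {fset U}),
    is_run tau b io Xs /\ accepting b io.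

End ActivationAlgebra.

(* Main.v *)
Require Import Defs.
From HB Require Import structures.
From mathcomp Require Import all_boot all_order finmap.
From Stdlib Require Import Classical ClassicalEpsilon Lia.
From mathcomp Require Import zify.
Set Implicit Arguments. Unset Strict Implicit. Unset Printing Implicit Defensive.
Import Order.TTheory.
Local Open Scope fset_scope.

Lemma index_subseq (T : eqType) (s s' : seq T) z g :
  uniq s -> subseq s' s -> z \in s' -> g \in s' ->
  (index z s <= index g s)%N -> (index z s' <= index g s')%N.
Proof.
have ixc : forall (x w : T) l, w != x -> index w (x :: l) = (index w l).+1.
  by move=> x w l wx /=; rewrite eq_sym (negbTE wx).
elim: s s' => [|x s0 IH] s'.
  by move=> _; rewrite subseq0 => /eqP -> .
rewrite cons_uniq; case/andP=> xs0 us0.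
case: s' => [|y s1] //.
move=> /= Hsub.
case: (y =P x) Hsub => [E|/eqP yx] Hsub; first subst y.
  rewrite !inE; case: (z =P x) => [->|/eqP zx].
    by move=> *; rewrite /= eqxx.
  case: (g =P x) => [->|/eqP gx] Hz Hg.
    by rewrite eqxx (eq_sym x z) (negbTE zx).
  rewrite (eq_sym x z) (negbTE zx) (eq_sym x g) (negbTE gx) !ltnS => Hle.
  by apply: IH.
move=> Hz Hg.
have xn : x \notin y :: s1.
  apply/negP=> /(mem_subseq Hsub); by rewrite (negbTE xs0).
have zx : z != x by apply: contraNneq xn => <-.
have gx : g != x by apply: contraNneq xn => <-.
rewrite (eq_sym x z) (negbTE zx) (eq_sym x g) (negbTE gx) ltnS => Hle.
exact: (IH (y :: s1) us0 Hsub Hz Hg Hle).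
Qed.

Lemma koenig_fin (T : eqType) (L : seq T) (Q : T -> nat -> Prop) :
  (forall r k k', (k' <= k)%N -> Q r k -> Q r k') ->
  (forall k, exists r, r \in L /\ Q r k) ->
  exists r, r \in L /\ forall k, Q r k.
Proof.
elim: L Q => [|x L IH] Q Hdown H.
  by have [r [] ] := H 0%N.
case: (classic (forall k, Q x k)) => [Hx|].
  by exists x; rewrite mem_head.
move/not_all_ex_not=> [k0 Hk0].
have H' : forall k, exists r, r \in L /\ Q r (k + k0)%N.
  move=> k; have [r [rin Hr]] := H (k + k0)%N.
  move: rin; rewrite inE; case/orP=> [/eqP E|rin].
    by subst r; exfalso; apply: Hk0; apply: (Hdown x (k + k0)%N) => //; rewrite leq_addl.
  by exists r.
have [r [rin Hr]] := IH (fun r k => Q r (k + k0)%N)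
   (fun r k k' le => Hdown r _ _ (leq_add le (leqnn k0))) H'.
exists r; split; first by rewrite inE rin orbT.
by move=> k; apply: (Hdown r (k + k0)%N) => //; rewrite leq_addr.
Qed.

Lemma least_ex (P : nat -> Prop) : (exists n, P n) ->
  exists n, P n /\ forall k, (k < n)%N -> ~ P k.
Proof.
move=> [n Pn].
elim: n {-2}n (leqnn n) Pn => [|m IH] n Hn Pn.
  by move: Hn; rewrite leqn0 => /eqP E; subst n; exists 0%N.
case: (classic (exists k, (k < n)%N /\ P k)) => [[k [kn Pk]]|H].
  by apply: (IH k) => //; rewrite -ltnS; apply: leq_trans Hn.
exists n; split=> // k kn Pk; apply: H; by exists k.
Qed.

Section Sound.
Variables (disp : Order.disp_t) (A : finTBLatticeType disp) (alpha : A)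
  (U : choiceType) (C : countType)
  (M : {fset mor A U}) (hM : forall m, m \in M -> wf_mor m)
  (tau : nat -> mor A U) (htau : forall n, tau n \in M).
Variables (b : nat -> board A U C) (io : nat -> nat) (Xs : nat -> {fset U}).
Hypothesis Hrun : is_run alpha tau b io Xs.

Lemma io_mono : {mono io : m n / (m <= n)%N}.
Proof. apply: leq_mono; apply: homo_ltn => //; [exact: ltn_trans | by case: Hrun]. Qed.

Lemma io_ltE m n : (io m < io n)%N = (m < n)%N.
Proof. by rewrite ltnNge io_mono -ltnNge. Qed.

Lemma io_inj m n : io m = io n -> m = n.
Proof. by move=> E; apply/eqP; rewrite eqn_leq -(io_mono m n) -(io_mono n m) E leqnn. Qed.

Lemma between n t : (io n < t < io n.+1)%N -> forall m, io m <> t.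
Proof.
case/andP=> h1 h2 m E; subst t.
move: h1 h2; rewrite !io_ltE ltnS => h1 h2.
by move: (leq_ltn_trans h2 h1); rewrite ltnn.
Qed.
Lemma Xs_between n d : (io n + d.+1 <= io n.+1)%N -> Xs (io n + d.+1) = mcod (tau n).
Proof.
case: Hrun => _ [_ [Htau Hnt]].
elim: d => [|d IH] H.
  by rewrite addn1; case: (Htau n) => _ [-> _].
rewrite addnS; case: (Hnt (io n + d.+1)%N).
  apply: (between (n := n)); apply/andP; split; lia.
by move=> E _; rewrite -addnS addnS E; apply: IH; lia.
Qed.

Lemma run_describes : describes_path tau.
Proof.
move=> n; case: Hrun => Hio [_ [Htau _]].
have Hlt := Hio n.
have Ed : io n.+1 = (io n + (io n.+1 - io n).-1.+1)%N.
  by rewrite prednK ?subn_gt0 // subnKC // ltnW.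
have H := @Xs_between n (io n.+1 - io n).-1; rewrite -Ed in H.
by rewrite -(H (leqnn _)); case: (Htau n.+1) => ->.
Qed.

Lemma trunc_sub (Th : seq C) g (S : {fset C}) : trunc Th g S `<=` S.
Proof.
rewrite /trunc; case: ifP => _; last exact: fsubset_refl.
by apply/fsubsetP=> z; rewrite inE => /andP[].
Qed.

Hypothesis halpha : alpha <> Order.bottom.
Variables (N : nat) (gam : C).
Hypothesis HN : forall n, (N <= n)%N -> gam \in (b n).1.

Definition node := (U * A * {fset C})%type.
Definition valid t (nd : node) : Prop := nd.2 \in (b t).2 nd.1.1 nd.1.2 /\ gam \in nd.2.

Definition R t (nd nd' : node) : Prop :=
  ((exists n, io n = t) -> exists n c, io n = t /\ (nd.1.1, c, nd'.1.1) \in mrel (tau n) /\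
      ((Order.join nd.1.2 c = alpha /\ nd'.1.2 = Order.bottom) \/
       (Order.join nd.1.2 c <> alpha /\ nd'.1.2 = Order.join nd.1.2 c /\ nd'.2 = nd.2))) /\
  ((forall n, io n <> t) -> nd'.1.1 = nd.1.1 /\ nd'.1.2 = nd.1.2 /\ nd'.2 `<=` nd.2).

Lemma parent t nd' : (N <= t)%N -> valid t.+1 nd' -> exists nd, valid t nd /\ R t nd nd'.
Proof.
case: nd' => [[y a'] S'] HNt [/= HS' HgS'].
case: Hrun => _ [_ [Htau Hnt]].
case: (classic (exists n, io n = t)) => [[n En]|Hno]; last first.
  have Hno' : forall n, io n <> t by move=> n E; apply: Hno; exists n.
  have [_ Hst] := Hnt t Hno'.
  have R2 : forall nd : node, nd.1.1 = y -> nd.1.2 = a' -> S' `<=` nd.2 -> R t nd (y, a', S').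
    move=> nd h1 h2 h3; split; first by move=> [m Em]; case: (Hno' m).
    by move=> _ /=; rewrite h1 h2.
  case: Hst => [[Hw _]|[[_ [Hp1 Hp2]]|[g [_ [_ [_ [Hr _]]]]]]].
  - exists (y, a', S'); split; last by apply: R2 => //; exact: fsubset_refl.
    by split=> //=; apply: (fsubsetP (Hw y a')).
  - exists (y, a', S'); split; last by apply: R2 => //; exact: fsubset_refl.
    split=> //=.
    case: (a' =P Order.bottom) => [Ea|Ea]; last by rewrite -(Hp2 y a' Ea).
    subst a'; have [_ Hsub] := Hp1 y; move: (fsubsetP Hsub _ HS'); rewrite in_fsetU.
    case/orP=> // ; rewrite in_fset1 => /eqP E; by rewrite E in HgS'.
  - move: HS'; rewrite Hr => /imfsetP [S0 /= HS0 ES].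
    have sub : S' `<=` S0 by rewrite ES; exact: trunc_sub.
    exists (y, a', S0); split; last by apply: R2.
    by split=> //=; apply: (fsubsetP sub).
have [HXd [HXc Hs]] := Htau n; rewrite En in Hs.
case: Hs => [Thstar [Tho [iota [Hind [uTho [Hfresh [HD [_ [_ [H1 [Hal [Hbot Hoth]]]]]]]]]]]].
have R1 : forall (nd : node) c, (nd.1.1, c, y) \in mrel (tau n) ->
    ((Order.join nd.1.2 c = alpha /\ a' = Order.bottom) \/
     (Order.join nd.1.2 c <> alpha /\ a' = Order.join nd.1.2 c /\ S' = nd.2)) ->
    R t nd (y, a', S').
  move=> nd c Hm Hc; split; first by move=> _; exists n, c.
  by move=> H; case: (H n).
case: (a' =P alpha) => [Ea|Eal].
  by move: HS'; rewrite Ea Hal in_fset0.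
case: (a' =P Order.bottom) => [Ea|Eb].
  subst a'; case/(Hbot y S'): HS' => [[x [bb [c [Hx [Hm Ej]]]]]|[S0 [[x [bb [c [Hx [Hm Ej]]]]] ES]]].
  - exists (x, bb, S'); split => //; apply: (R1 _ c) => //=; right.
    by split; [rewrite -Ej => E; apply: halpha | split].
  - exists (x, bb, S0); split; last by apply: (R1 _ c) => //=; left.
    split=> //=.
    move: HgS'; rewrite ES in_fsetU in_fset1; case/orP=> // /eqP Eg.
    have Dy : y \in mcod (tau n) /\ exists S, sstar (b t).2 (tau n) y alpha S.
      split; first by have := hM (htau n) Hm => -[].
      by exists S0, x, bb, c.
    have := Hfresh _ (HD y Dy); rewrite -Eg.
    by rewrite HN.
case/(Hoth y a' S' Eb Eal): HS' => x [bb [c [Hx [Hm Ej]]]].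
exists (x, bb, S'); split => //; apply: (R1 _ c) => //=; right.
by split; [rewrite -Ej | split].
Qed.

Fixpoint descK t (nd : node) k (nd' : node) : Prop :=
  match k with
  | 0 => nd' = nd /\ valid t nd
  | k'.+1 => valid t nd /\ exists m, R t nd m /\ descK t.+1 m k' nd'
  end.

Lemma descK_valid t nd k nd' : descK t nd k nd' -> valid t nd.
Proof. by case: k => [[_ H]|k [H _]]. Qed.

Lemma descK_snoc t nd k m nd' : descK t nd k m -> R (t + k) m nd' ->
  valid (t + k).+1 nd' -> descK t nd k.+1 nd'.
Proof.
elim: k t nd => [|k IH] t nd /=.
  by move=> [-> Hv]; rewrite addn0 => HR Hv'; split=> //; exists nd'.
move=> [Hv [m' [HR' Hd]]] HR Hv'; split=> //; exists m'; split=> //.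
by apply: (IH t.+1 m') => //; rewrite addSnnS.
Qed.

Lemma descK_prefix t nd k k' nd' : (k' <= k)%N -> descK t nd k nd' ->
  exists m, descK t nd k' m.
Proof.
elim: k' t nd k => [|k' IH] t nd k.
  by move=> _ H; exists nd; split=> //; exact: descK_valid H.
case: k => [|k] // ; rewrite ltnS => le /= [Hv [m [HR Hd]]].
have [m' Hm'] := IH t.+1 m k le Hd.
by exists m'; split=> //; exists m.
Qed.

Lemma ancestor t k nd' : (N <= t)%N -> valid (t + k) nd' -> exists nd, descK t nd k nd'.
Proof.
move=> Ht; elim: k nd' => [|k IH] nd'.
  by rewrite addn0 => Hv; exists nd'.
rewrite addnS => Hv.
have [m [Hm HR]] := parent (leq_trans Ht (leq_addr _ _)) Hv.
have [nd Hd] := IH m Hm.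
by exists nd; apply: (descK_snoc Hd).
Qed.

Definition Lnodes t : seq node :=
  [seq (p, St) | p <- [seq (x, a) | x <- enum_fset (Xs t), a <- enum A],
                St <- enum_fset ((b t).2 p.1 p.2)].

Lemma valid_in t nd : valid t nd -> nd \in Lnodes t.
Proof.
case: nd => [[x a] S] [/= HS _].
case: Hrun => _ [Hb _].
have Hx : x \in Xs t.
  case: (boolP (x \in Xs t)) => // Hx.
  by have [_ [H0 _]] := Hb t; move: HS; rewrite H0.
apply/allpairsPdep; exists (x, a), S; split=> //.
by apply/allpairsP; exists (x, a); split => //; rewrite mem_enum.
Qed.

Definition good t nd := forall k, exists nd', descK t nd k nd'.

Lemma good_child t nd : good t nd -> exists m, R t nd m /\ valid t.+1 m /\ good t.+1 m.
Proof.
move=> Hg.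
have [m [_ Hm]] := koenig_fin (L := Lnodes t.+1)
  (Q := fun m k => R t nd m /\ exists nd', descK t.+1 m k nd')
  (fun r k k' le '(conj HR (ex_intro nd' Hd)) => conj HR (descK_prefix le Hd))
  (fun k => match Hg k.+1 with ex_intro nd' (conj _ (ex_intro m (conj HR Hd))) =>
     ex_intro _ m (conj (valid_in (descK_valid Hd)) (conj HR (ex_intro _ nd' Hd))) end).
exists m; split; first by case: (Hm 0%N).
split; first by case: (Hm 0%N) => _ [nd' Hd]; exact: descK_valid Hd.
by move=> k; case: (Hm k).
Qed.

Lemma good_root : exists nd, valid N nd /\ good N nd.
Proof.
case: Hrun => _ [Hb _].
have Hex : forall k, exists nd', valid (N + k) nd'.
  move=> k; have [_ [_ [_ Hocc]]] := Hb (N + k)%N.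
  have [x [a [S [HS Hg]]]] := Hocc gam (HN (leq_addr _ _)).
  by exists (x, a, S).
have [r [_ Hr]] := koenig_fin (L := Lnodes N)
  (Q := fun r k => exists nd', descK N r k nd')
  (fun r k k' le '(ex_intro nd' Hd) => descK_prefix le Hd)
  (fun k => match Hex k with ex_intro nd' Hv =>
     match ancestor (leqnn N) Hv with ex_intro r Hd =>
       ex_intro _ r (conj (valid_in (descK_valid Hd)) (ex_intro _ nd' Hd)) end end).
exists r; split => //; case: (Hr 0%N) => nd' Hd; exact: descK_valid Hd.
Qed.

Lemma ex_ch t nd : exists m, good t nd -> R t nd m /\ valid t.+1 m /\ good t.+1 m.
Proof.
case: (classic (good t nd)) => [Hg|Hg]; last by exists nd.
by have [m Hm] := good_child Hg; exists m.
Qed.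

Definition ch t nd := proj1_sig (constructive_indefinite_description _ (ex_ch t nd)).
Definition root := proj1_sig (constructive_indefinite_description _ good_root).

Fixpoint br k := match k with 0 => root | k'.+1 => ch (N + k') (br k') end.

Lemma br_good k : valid (N + k) (br k) /\ good (N + k) (br k).
Proof.
elim: k => [|k [Hv Hg]] /=.
  by rewrite addn0 /root; case: (constructive_indefinite_description _ _).
rewrite /ch; case: (constructive_indefinite_description _ _) => m /= Hm.
by have [_ [H1 H2]] := Hm Hg; rewrite addnS.
Qed.

Lemma br_R k : R (N + k) (br k) (br k.+1).
Proof.
have [_ Hg] := br_good k; rewrite /= /ch.
by case: (constructive_indefinite_description _ _) => m /= Hm; case: (Hm Hg).
Qed.

Definition nd t := br (t - N).
Definition pos t := (nd t).1.1.
Definition lab t := (nd t).1.2.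
Definition stk t := (nd t).2.

Lemma nd_valid t : (N <= t)%N -> valid t (nd t).
Proof. by move=> Ht; have [Hv _] := br_good (t - N); rewrite subnKC in Hv. Qed.

Lemma nd_R t : (N <= t)%N -> R t (nd t) (nd t.+1).
Proof.
move=> Ht; have := br_R (t - N); rewrite subnKC // /nd subSn //.
Qed.

Lemma nontau_step t : (N <= t)%N -> (forall n, io n <> t) ->
  pos t.+1 = pos t /\ lab t.+1 = lab t /\ stk t.+1 `<=` stk t.
Proof. by move=> Ht Hno; case: (nd_R Ht) => _ H; apply: H. Qed.

Definition cspec n c :=
  (N <= io n)%N -> (pos (io n), c, pos (io n).+1) \in mrel (tau n) /\
    ((Order.join (lab (io n)) c = alpha /\ lab (io n).+1 = Order.bottom) \/
     (Order.join (lab (io n)) c <> alpha /\ lab (io n).+1 = Order.join (lab (io n)) c /\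
      stk (io n).+1 = stk (io n))).

Lemma ex_cc n : exists c, cspec n c.
Proof.
case: (boolP (N <= io n)%N) => Hn; last by exists Order.bottom => H; rewrite H in Hn.
case: (nd_R Hn) => H _; have [n' [c [En' Hc]]] := H (ex_intro _ n erefl).
by rewrite (io_inj En') in Hc; exists c.
Qed.

Definition cc n := proj1_sig (constructive_indefinite_description _ (ex_cc n)).
Lemma ccP n : cspec n (cc n).
Proof. by rewrite /cc; case: (constructive_indefinite_description _ _). Qed.

Definition addP n := (N <= io n)%N /\ Order.join (lab (io n)) (cc n) = alpha.

Lemma pos_between n d : (N <= io n)%N -> (io n + d.+1 <= io n.+1)%N ->
  pos (io n + d.+1) = pos (io n).+1 /\ lab (io n + d.+1) = lab (io n).+1.
Proof.
move=> HN0; elim: d => [|d IH] H; first by rewrite addn1.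
have Hno : forall m, io m <> (io n + d.+1)%N.
  by apply: (between (n := n)); apply/andP; split; lia.
have [E1 [E2 _]] := nontau_step (leq_trans HN0 (leq_addr _ _)) Hno.
rewrite addnS E1 E2; apply: IH; lia.
Qed.

Lemma pos_next n : (N <= io n)%N ->
  pos (io n.+1) = pos (io n).+1 /\ lab (io n.+1) = lab (io n).+1.
Proof.
move=> HN0; case: Hrun => Hio _; have Hlt := Hio n.
have Ed : io n.+1 = (io n + (io n.+1 - io n).-1.+1)%N.
  by rewrite prednK ?subn_gt0 // subnKC // ltnW.
have H := @pos_between n (io n.+1 - io n).-1 HN0; rewrite -Ed in H.
exact: H (leqnn _).
Qed.

Lemma ord_pres t z g : z \in (b t).1 -> g \in (b t).1 -> z \in (b t.+1).1 -> g \in (b t.+1).1 ->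
  (index z (b t).1 <= index g (b t).1)%N -> (index z (b t.+1).1 <= index g (b t.+1).1)%N.
Proof.
move=> z0 g0 z1 g1 Hle.
case: Hrun => _ [Hb [Htau Hnt]].
have [u0 _] := Hb t.
case: (classic (exists n, io n = t)) => [[n En]|Hno].
  have [_ [_ Hs]] := Htau n; rewrite En in Hs.
  case: Hs => [Thstar [Tho [iota [[Hsub _] [_ [Hfresh [_ [_ [_ [E1 _]]]]]]]]]].
  have zT : z \notin Tho by apply/negP => /Hfresh; rewrite z0.
  have gT : g \notin Tho by apply/negP => /Hfresh; rewrite g0.
  move: z1 g1; rewrite E1 !mem_cat (negbTE zT) (negbTE gT) !orbF => z1 g1.
  rewrite !index_cat z1 g1.
  exact: index_subseq u0 Hsub z1 g1 Hle.
have Hno' : forall n, io n <> t by move=> n E; apply: Hno; exists n.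
have [_ Hst] := Hnt t Hno'.
case: Hst => [[_ [Hsub _]]|[[E _]|[g' [_ [_ [_ [_ [Hsub _]]]]]]]].
- exact: index_subseq u0 Hsub z1 g1 Hle.
- by rewrite E.
- exact: index_subseq u0 Hsub z1 g1 Hle.
Qed.

Lemma stk_chips t z : (N <= t)%N -> z \in stk t -> z \in (b t).1.
Proof.
move=> Ht Hz; have [Hv _] := nd_valid Ht.
case: Hrun => _ [Hb _]; have [_ [_ [H _]]] := Hb t.
exact: H Hv z Hz.
Qed.

Hypothesis HR : forall m, exists i, (m <= i)%N /\ (forall n, io n <> i) /\
                         reset_step gam (b i) (b i.+1).

Lemma inf_add m : exists n, (m <= n)%N /\ addP n.
Proof.
apply: NNPP => Hno.
have Hno' : forall n, (m <= n)%N -> ~ addP n by move=> n Hn Ha; apply: Hno; exists n.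
have [i [Hi [Hint Hres]]] := HR (maxn N (io m)).
have [j [Hj [_ Hresj]]] := HR i.+1.
have HNi : (N <= i)%N by apply: leq_trans Hi; rewrite leq_maxl.
have Hmi : (io m <= i)%N by apply: leq_trans Hi; rewrite leq_maxr.
have Hbase : is_top (b i.+1).1 gam (stk i.+1).
  have [Hv1 Hg1] := nd_valid (leqW HNi).
  case: Hres => _ [_ [Hr _]].
  move: (Hv1); rewrite Hr => /imfsetP [S0 /= HS0 ES].
  have gS0 : gam \in S0 by apply: (fsubsetP (trunc_sub (b i).1 gam S0)); rewrite -ES.
  split=> // z Hz.
  have := Hz; rewrite /stk ES /trunc gS0 inE => /andP [zS0 Hle].
  case: Hrun => _ [Hb _]; have [_ [_ [Hch _]]] := Hb i.
  apply: ord_pres => //; try exact: (Hch _ _ _ HS0).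
  - exact: stk_chips (leqW HNi) Hz.
  - exact: HN (leqW HNi).
have Hstep : forall d, (i.+1 + d <= j)%N -> is_top (b (i.+1 + d)).1 gam (stk (i.+1 + d)).
  elim=> [|d IH] Hd; first by rewrite addn0.
  have Ht : (N <= i.+1 + d)%N by lia.
  have Hd' : (i.+1 + d <= j)%N by lia.
  have IH' := IH Hd'.
  have Hsub : stk (i.+1 + d).+1 `<=` stk (i.+1 + d).
    case: (classic (exists n, io n = (i.+1 + d)%N)) => [[n En]|Hno2].
      have Hmn : (m <= n)%N.
        by rewrite -io_mono; apply: leq_trans Hmi _; rewrite En; lia.
      have HNn : (N <= io n)%N by rewrite En.
      have [_ Hc] := ccP HNn.
      case: Hc => [[Ha _]|[_ [_ Es]]].
        by exfalso; apply: (Hno' n Hmn); split => //; rewrite En.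
      by rewrite -En Es fsubset_refl.
    have Hno3 : forall n, io n <> (i.+1 + d)%N by move=> n E; apply: Hno2; exists n.
    by have [_ [_ ?]] := nontau_step Ht Hno3.
  have [_ HgS] := nd_valid (leqW Ht).
  rewrite addnS; split=> // z Hz.
  have zS : z \in stk (i.+1 + d) by apply: (fsubsetP Hsub).
  case: IH' => _ Htop.
  apply: ord_pres.
  - exact: stk_chips Ht zS.
  - exact: HN Ht.
  - exact: stk_chips (leqW Ht) Hz.
  - exact: HN (leqW Ht).
  - exact: Htop.
have Htopj := Hstep (j - i.+1)%N; rewrite subnKC // in Htopj.
have [Hvj _] := nd_valid (leq_trans HNi (leq_trans (leqnSn _) Hj)).
case: Hresj => _ [Hcov _].
by apply: (Hcov _ _ _ Hvj); apply: Htopj.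
Qed.

Lemma ex_nxt m : exists n, ((m <= n)%N /\ addP n) /\ forall k, (k < n)%N -> ~ ((m <= k)%N /\ addP k).
Proof. apply: least_ex; exact: inf_add. Qed.

Definition nxt m := proj1_sig (constructive_indefinite_description _ (ex_nxt m)).
Lemma nxtP m : ((m <= nxt m)%N /\ addP (nxt m)) /\
   forall k, (k < nxt m)%N -> ~ ((m <= k)%N /\ addP k).
Proof. by rewrite /nxt; case: (constructive_indefinite_description _ _). Qed.

Fixpoint ns i := match i with 0 => nxt 0 | i'.+1 => nxt (ns i').+1 end.
Definition kk i := (ns i).+1.
Definition ss i := pos (io (kk i)).

Lemma ns_add i : addP (ns i).
Proof.
case: i => [|i] /=; first by case: (nxtP 0) => [[_ H] _].
by case: (nxtP (ns i).+1) => [[_ H] _].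
Qed.

Lemma ns_lt i : (ns i < ns i.+1)%N.
Proof. by rewrite /=; case: (nxtP (ns i).+1) => [[H _] _]. Qed.

Lemma ns_min i k : (ns i < k < ns i.+1)%N -> ~ addP k.
Proof.
case/andP=> h1 h2 Ha; rewrite /= in h2.
by case: (nxtP (ns i).+1) => _ H; apply: (H k h2).
Qed.

Lemma N_le n i : (ns i <= n)%N -> (N <= io n)%N.
Proof. by move=> le; have [H _] := ns_add i; apply: leq_trans H _; rewrite io_mono. Qed.

Lemma seg_path i j : (kk i + j <= ns i.+1)%N ->
  pathrel tau (kk i) j (ss i) (Order.join (lab (io (kk i + j))) (cc (kk i + j)))
          (pos (io (kk i + j)).+1).
Proof.
have HNk : (N <= io (ns i))%N by have [H _] := ns_add i.
have Hlab0 : lab (io (kk i)) = Order.bottom.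
  have [_ E] := pos_next HNk; rewrite /kk E.
  have [HN' Ha] := ns_add i.
  have [_ Hc] := ccP HN'.
  by case: Hc => [[_ ->]|[Hne _]].
elim: j => [|j IH] Hj.
  rewrite addn0 /= Hlab0 join0x.
  have HN1 : (N <= io (kk i))%N by apply: (N_le (i := i)); rewrite /kk.
  by have [Hm _] := ccP HN1; rewrite /ss.
have HNj : (N <= io (kk i + j))%N by apply: (N_le (i := i)); rewrite /kk; lia.
have [Hm _] := ccP HNj.
have HNj1 : (N <= io (kk i + j.+1))%N by apply: (N_le (i := i)); rewrite /kk; lia.
have [Hm1 _] := ccP HNj1.
have [Ep El] := pos_next HNj.
rewrite -addnS in Ep El.
exists (pos (io (kk i + j)).+1), (Order.join (lab (io (kk i + j))) (cc (kk i + j))), (cc (kk i + j.+1)).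
split; first by apply: IH; lia.
split; first by rewrite -Ep.
congr Order.join; rewrite El.
have Hnadd : ~ addP (kk i + j) by apply: (ns_min (i := i)); move: Hj; rewrite /kk => Hj'; apply/andP; split; lia.
have [_ Hc] := ccP HNj.
case: Hc => [[Ha _]|[_ [-> _]]] //.
by exfalso; apply: Hnadd.
Qed.

Lemma sound_trace : trace_condition alpha tau.
Proof.
exists kk, ss; split; first by move=> i; rewrite /kk ltnS; apply: ns_lt.
split.
  move=> i; have HN1 : (N <= io (kk i))%N by apply: (N_le (i := i)); rewrite /kk.
  have [Hv _] := nd_valid HN1.
  case: Hrun => _ [Hb [Htau _]]; have [_ [H0 _]] := Hb (io (kk i)).
  have [<- _] := Htau (kk i).
  case: (boolP (ss i \in Xs (io (kk i)))) => // Hx.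
  move: Hx; rewrite /ss /pos => Hx.
  by move: Hv; rewrite (H0 _ _ Hx) in_fset0.
move=> i; rewrite /Pcomp.
have E : ((kk i.+1 - kk i).-1 = ns i.+1 - kk i)%N.
  by rewrite /kk subSS; have := ns_lt i; lia.
rewrite E.
have Hle : (kk i + (ns i.+1 - kk i) <= ns i.+1)%N by have := ns_lt i; rewrite /kk; lia.
have := seg_path Hle.
have Ek : (kk i + (ns i.+1 - kk i) = ns i.+1)%N by have := ns_lt i; rewrite /kk; lia.
rewrite Ek; have [HN' ->] := ns_add i.+1.
have [Ep _] := pos_next HN'.
by rewrite /ss /kk Ep.
Qed.
End Sound.

Lemma soundness (disp : Order.disp_t) (A : finTBLatticeType disp)
  (alpha : A) (halpha : alpha <> Order.bottom)
  (U : choiceType) (C : countType)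
  (M : {fset mor A U}) (hM : forall m, m \in M -> wf_mor m)
  (tau : nat -> mor A U) (htau : forall n, tau n \in M) :
  has_accepting_run alpha C tau -> describes_path tau /\ trace_condition alpha tau.
Proof.
case=> b [io [Xs [Hrun [N [g [HN HR]]]]]].
split; first exact: run_describes Hrun.
exact: (sound_trace hM htau Hrun halpha HN HR).
Qed.


Section Boards.
Variables (disp : Order.disp_t) (A : finTBLatticeType disp) (alpha : A)
  (U : choiceType) (C : countType).

Definition sfs (Th : seq C) : {fset C} := seq_fset tt Th.
Arguments sfs : simpl never.
Lemma in_sep (S : {fset C}) z (P : C -> bool) : (z \in [fset y in S | P y]) = (z \in S) && P z.
Proof. by rewrite !inE. Qed.
Lemma sfsE Th z : (z \in sfs Th) = (z \in Th).
Proof. exact: seq_fsetE. Qed.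

Definition sb (x : U) (a : A) (Th : seq C) : board A U C :=
  (Th, fun y a' => if (y == x) && (a' == a) then [fset sfs Th] else fset0).
Definition eb : board A U C := ([::], fun _ _ => fset0).

Lemma sb_mem x a Th y a' S : (S \in (sb x a Th).2 y a') = [&& y == x, a' == a & S == sfs Th].
Proof. by rewrite /=; case: (y == x); case: (a' == a); rewrite ?in_fset1 ?in_fset0. Qed.

Lemma occurs_sb x a Th g : occurs (sb x a Th).2 g <-> g \in Th.
Proof.
split.
  by move=> [y [a' [S [HS Hg]]]]; move: HS; rewrite sb_mem => /and3P [_ _ /eqP E]; rewrite E sfsE in Hg.
by move=> Hg; exists x, a, (sfs Th); rewrite sb_mem !eqxx sfsE.
Qed.

Lemma occurs_eb g : ~ occurs eb.2 g.
Proof. by move=> [y [a' [S [HS _]]]]. Qed.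

Lemma sb_board X x a Th : uniq Th -> x \in X -> is_board X (sb x a Th).
Proof.
move=> u xX; split=> //; split.
  move=> y a' yX /=; case: eqP => [E|] //=; by rewrite E xX in yX.
split; last by move=> g Hg; apply/occurs_sb.
by move=> y a' S; rewrite sb_mem => /and3P [_ _ /eqP ->] g; rewrite sfsE.
Qed.

Lemma eb_board X : is_board X eb.
Proof. by split=> //; split=> //; split. Qed.

Lemma weak_sb x a Th : weak_step (sb x a Th) (sb x a Th).
Proof.
split; first by move=> *; exact: fsubset_refl.
split; first exact: subseq_refl.
by move=> g; split; move/occurs_sb.
Qed.

Lemma weak_eb : weak_step eb eb.
Proof. by split=> //; split=> // g; split=> // /occurs_eb. Qed.

Lemma sstar_sb x a Th t y a' S : sstar (sb x a Th).2 t y a' S <->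
  S = sfs Th /\ exists c, (x, c, y) \in mrel t /\ a' = Order.join a c.
Proof.
split.
  move=> [x' [bb [c [HS [Hm E]]]]]; move: HS; rewrite sb_mem => /and3P [/eqP E1 /eqP E2 /eqP E3].
  by subst; split => //; exists c.
by move=> [-> [c [Hm E]]]; exists x, a, c; rewrite sb_mem !eqxx.
Qed.

Lemma sstar_eb t y a' S : ~ sstar eb.2 t y a' S.
Proof. by move=> [x' [bb [c [HS _]]]]. Qed.

Lemma succ_eb (iota0 : C) t : succ_step alpha t eb eb.
Proof.
exists [::], [::], (fun _ => iota0).
split; first by split=> // g; split=> // [[y [a [S [/sstar_eb]]]]].
split=> //; split=> //; split; first by move=> y [_ [S /sstar_eb]].
split; first by move=> y y' [_ [S /sstar_eb]].
split=> //; split=> //; split=> //.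
split; first by move=> y S; split=> //; case=> [/sstar_eb|[S0 [/sstar_eb]]].
by move=> y a S _ _; split=> // /sstar_eb.
Qed.

Lemma pop_eb x : pop_step eb (sb x Order.bottom [::]).
Proof.
split=> //; split.
  move=> y; split; first exact: fsub0set.
  apply/fsubsetP=> S; rewrite sb_mem fset0U in_fset1 => /and3P [_ _ /eqP ->].
  by apply/eqP/fsetP=> z; rewrite sfsE.
by move=> y a Ha /=; case: eqP => //= _; case: eqP.
Qed.

Lemma reset_sb x a (g0 g1 : C) : g0 != g1 ->
  reset_step g0 (sb x a [:: g0; g1]) (sb x a [:: g0]).
Proof.
move=> ng.
have Htr : trunc [:: g0; g1] g0 (sfs [:: g0; g1]) = sfs [:: g0].
  apply/fsetP=> z; rewrite /trunc (sfsE _ g0) mem_head.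
  rewrite in_sep !sfsE !inE /= eqxx.
  case: (z =P g0) => [->|nz] /=; first by rewrite eqxx.
  by rewrite (eq_sym g0 z); move/eqP: nz => nz; rewrite (negbTE nz) andbF.
split; first by rewrite mem_head.
split.
  move=> y a' S; rewrite sb_mem => /and3P [_ _ /eqP ->] [_ Htop].
  have := Htop g1; rewrite sfsE !inE eqxx orbT /= eqxx => /(_ isT).
  by rewrite eqxx (negbTE ng).
split.
  move=> y a' /=; case: ((y == x) && (a' == a)); last by rewrite imfset0.
  apply/fsetP=> S'; rewrite in_fset1; apply/eqP/imfsetP.
    by move=> ->; exists (sfs [:: g0; g1]); rewrite ?in_fset1 ?Htr.
  by move=> [S /=]; rewrite in_fset1 => /eqP -> ->.
split; first by rewrite /= eqxx.
by move=> g; split; move/occurs_sb.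
Qed.
End Boards.

Lemma pathrel_ext (disp : Order.disp_t) (A : finTBLatticeType disp) (U : choiceType)
  (tau : nat -> mor A U) n j x c z :
  pathrel tau n j x c z -> exists (f : nat -> U) (g : nat -> A),
    f 0 = x /\ f j.+1 = z /\
    (forall l, (l <= j)%N -> (f l, g l, f l.+1) \in mrel (tau (n + l)%N)) /\
    c = \big[Order.join/Order.bottom]_(l < j.+1) g l.
Proof.
elim: j c z => [|j IH] c z /=.
  move=> H; exists (fun l => if l == 0 then x else z), (fun _ => c).
  split=> //; split=> //; split.
    by move=> l; rewrite leqn0 => /eqP ->; rewrite addn0.
  by rewrite big_ord_recr big_ord0 /= join0x.
move=> [y [a [bb [Hp [Hm E]]]]].
have [f [g [f0 [fj [Hf Ej]]]]] := IH _ _ Hp.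
exists (fun l => if (l <= j.+1)%N then f l else z), (fun l => if (l <= j)%N then g l else bb).
split; first by rewrite /= f0.
split; first by rewrite ltnn.
split.
  move=> l Hl; case: (ltngtP l j.+1) => [lt|gt|eq].
  - by have lt' := lt; rewrite ltnS in lt'; rewrite lt'; apply: Hf.
  - by rewrite ltnNge Hl in gt.
  - by subst l; rewrite ltnn fj.
rewrite big_ord_recr /= ltnn E Ej; congr Order.join.
by apply: eq_bigr => i _; rewrite -ltnS ltn_ord.
Qed.

Section Compl.
Variables (disp : Order.disp_t) (A : finTBLatticeType disp)
  (alpha : A) (halpha : alpha <> Order.bottom)
  (U : choiceType) (C : countType) (emb : nat -> C) (emb_inj : injective emb)
  (M : {fset mor A U}) (hM : forall m, m \in M -> wf_mor m)
  (tau : nat -> mor A U) (htau : forall n, tau n \in M).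
Hypothesis HD : describes_path tau.
Variables (k : nat -> nat) (s : nat -> U).
Hypotheses (Hk : forall i, (k i < k i.+1)%N) (Hs : forall i, s i \in mdom (tau (k i)))
  (HP : forall i, Pcomp tau (k i) (k i.+1) (s i) alpha (s i.+1)).

Lemma wf n x c y : (x, c, y) \in mrel (tau n) -> x \in mdom (tau n) /\ y \in mcod (tau n).
Proof. exact: hM (htau n) x c y. Qed.

Definition len i := (k i.+1 - k i).-1.
Lemma klen i : k i.+1 = (k i + (len i).+1)%N.
Proof. by rewrite /len prednK ?subn_gt0 // subnKC // ltnW. Qed.

Lemma k_mono : {mono k : a b / (a <= b)%N}.
Proof. apply: leq_mono; apply: homo_ltn => //; exact: ltn_trans. Qed.

Lemma k_ge i : (k 0 + i <= k i)%N.
Proof. by elim: i => [|i IH]; rewrite ?addn0 // addnS; apply: leq_ltn_trans IH (Hk i). Qed.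

Definition bjoin (m : nat) (g : nat -> A) := \big[Order.join/Order.bottom]_(l < m) g l.

Lemma ex_seg i : exists fg : (nat -> U) * (nat -> A), fg.1 0 = s i /\ fg.1 (len i).+1 = s i.+1 /\
  (forall l, (l <= len i)%N -> (fg.1 l, fg.2 l, fg.1 l.+1) \in mrel (tau (k i + l)%N)) /\
  alpha = bjoin (len i).+1 fg.2.
Proof.
have [f [g H]] := pathrel_ext (HP i).
by exists (f, g).
Qed.

Definition FG i := proj1_sig (constructive_indefinite_description _ (ex_seg i)).
Lemma FGP i : (FG i).1 0 = s i /\ (FG i).1 (len i).+1 = s i.+1 /\
  (forall l, (l <= len i)%N -> ((FG i).1 l, (FG i).2 l, (FG i).1 l.+1) \in mrel (tau (k i + l)%N)) /\
  alpha = bjoin (len i).+1 (FG i).2.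
Proof. by rewrite /FG; case: (constructive_indefinite_description _ _). Qed.

Lemma least_ex2 (P : nat -> Prop) : (exists n, P n) ->
  exists n, P n /\ forall j, (j < n)%N -> ~ P j.
Proof.
move=> [n Pn].
elim: n {-2}n (leqnn n) Pn => [|m IH] n Hn Pn.
  by move: Hn; rewrite leqn0 => /eqP E; subst n; exists 0%N.
case: (classic (exists j, (j < n)%N /\ P j)) => [[j [jn Pj]]|H].
  by apply: (IH j) => //; rewrite -ltnS; apply: leq_trans Hn.
exists n; split=> // j jn Pj; apply: H; by exists j.
Qed.

Lemma ex_segi n : exists i, (k 0 <= n)%N -> (k i <= n < k i.+1)%N.
Proof.
case: (boolP (k 0 <= n)%N) => H0; last by exists 0%N.
have Hex : exists i, (n < k i)%N.
  by exists n.+1; have := k_ge n.+1; lia.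
have [i0 [Hi0 Hmin]] := least_ex2 Hex.
case: i0 Hi0 Hmin => [|i] Hi Hmin; first by rewrite ltnNge H0 in Hi.
exists i => _; rewrite Hi andbT leqNgt; apply/negP; exact: Hmin.
Qed.

Definition seg n := proj1_sig (constructive_indefinite_description _ (ex_segi n)).
Lemma segP n : (k 0 <= n)%N -> (k (seg n) <= n < k (seg n).+1)%N.
Proof. by rewrite /seg; case: (constructive_indefinite_description _ _). Qed.

Lemma seg_uniq n i : (k i <= n < k i.+1)%N -> seg n = i.
Proof.
move=> /andP [h1 h2].
have H0 : (k 0 <= n)%N by apply: leq_trans h1; rewrite k_mono.
have /andP [g1 g2] := segP H0.
case: (ltngtP (seg n) i) => // H.
  have := H; rewrite -k_mono => H'; lia.
have := H; rewrite -k_mono => H'; lia.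
Qed.

Definition p n := (FG (seg n)).1 (n - k (seg n)).
Definition c n := (FG (seg n)).2 (n - k (seg n)).

Lemma pc_seg i l : (l <= len i)%N -> p (k i + l) = (FG i).1 l /\ c (k i + l) = (FG i).2 l.
Proof.
move=> Hl; have E : seg (k i + l) = i.
  apply: seg_uniq; rewrite leq_addr /= klen; lia.
by rewrite /p /c E addKn.
Qed.

Lemma p_k i : p (k i) = s i.
Proof. have [E _] := pc_seg (i := i) (l := 0) (leq0n _); rewrite addn0 in E; rewrite E; by case: (FGP i). Qed.

Lemma edge' i l : (l <= len i)%N ->
  (p (k i + l), c (k i + l), p (k i + l).+1) \in mrel (tau (k i + l)%N).
Proof.
move=> Hl; have [E1 E2] := pc_seg Hl.
have [_ [Hlast [Hm _]]] := FGP i.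
rewrite E1 E2 -addnS.
have -> : p (k i + l.+1) = (FG i).1 l.+1.
  case: (ltnP l (len i)) => Hll; first by have [-> _] := pc_seg Hll.
  have El : l = len i by apply/eqP; rewrite eqn_leq Hl Hll.
  by rewrite El -klen p_k Hlast.
exact: Hm.
Qed.

Lemma edge n : (k 0 <= n)%N -> (p n, c n, p n.+1) \in mrel (tau n).
Proof.
move=> H0; have /andP [h1 h2] := segP H0.
have Hl : (n - k (seg n) <= len (seg n))%N by move: h2; rewrite klen; lia.
have := edge' Hl; rewrite subnKC //.
Qed.

Lemma c_le n : (k 0 <= n)%N -> (c n <= alpha)%O.
Proof.
move=> H0; have /andP [h1 h2] := segP H0; set i := seg n in h1 h2.
set l := (n - k i)%N.
have En : n = (k i + l)%N by rewrite subnKC.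
have Hl : (l < (len i).+1)%N by move: h2; rewrite klen; lia.
have [_ E2] := pc_seg (ltnSE Hl).
have [_ [_ [_ Ea]]] := FGP i.
rewrite En E2 Ea /bjoin.
by rewrite (bigD1 (Ordinal Hl)) //= leUl.
Qed.

Definition pk (m i : nat) : nat := choice.pickle (m, i).
Lemma pk_inj m i m' i' : pk m i = pk m' i' -> m = m' /\ i = i'.
Proof. by move/(pcan_inj (@choice.pickleK_inv _)) => [-> ->]. Qed.
Definition iot n (y : U) : C := emb (pk n (index y (enum_fset (mcod (tau n))))).

Lemma iot_inj n y y' : y \in mcod (tau n) -> y' \in mcod (tau n) -> iot n y = iot n y' -> y = y'.
Proof.
move=> Hy Hy' /emb_inj /pk_inj [] _ E.
by rewrite -(nth_index y Hy) E nth_index.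
Qed.

Definition fresh n (Th : seq C) := forall g, g \in Th -> exists m i, (m < n)%N /\ g = emb (pk m i).

Lemma iot_fresh n Th y : fresh n Th -> iot n y \notin Th.
Proof.
move=> Hf; apply/negP => /Hf [m [i [lt /emb_inj /pk_inj [E _]]]].
by rewrite E ltnn in lt.
Qed.

Definition cnd n (a : A) (y : U) (a' : A) : bool :=
  [exists cc : A, ((p n, cc, y) \in mrel (tau n)) && (Order.join a cc == a')].

Lemma cndP n a y a' : reflect (exists cc, (p n, cc, y) \in mrel (tau n) /\ Order.join a cc = a')
  (cnd n a y a').
Proof.
apply: (iffP existsP) => [[cc /andP [H1 /eqP H2]]|[cc [H1 H2]]]; exists cc => //.
by rewrite H1 H2 eqxx.
Qed.

Definition Tho n (a : A) : seq C :=
  [seq iot n y | y <- enum_fset (mcod (tau n)) & cnd n a y alpha].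

Lemma Tho_uniq n a : uniq (Tho n a).
Proof.
rewrite map_inj_in_uniq; first exact/filter_uniq/fset_uniq.
move=> y y'; rewrite !mem_filter => /andP [_ Hy] /andP [_ Hy'].
exact: iot_inj.
Qed.

Lemma Tho_mem n a g : g \in Tho n a <-> exists y, [/\ y \in mcod (tau n), cnd n a y alpha & g = iot n y].
Proof.
split.
  by move=> /mapP [y]; rewrite mem_filter => /andP [H1 H2] ->; exists y.
by move=> [y [H1 H2 ->]]; apply: map_f; rewrite mem_filter H2.
Qed.

Definition sucb n (q : A * seq C) : board A U C :=
  (q.2 ++ Tho n q.1, fun y a' =>
    if a' == alpha then fset0
    else if a' == Order.bottom then
      ((if cnd n q.1 y Order.bottom then [fset sfs q.2] else fset0) `|`
       (if cnd n q.1 y alpha then [fset sfs q.2 `|` [fset iot n y]] else fset0))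
    else if cnd n q.1 y a' then [fset sfs q.2] else fset0).

Lemma sucb_mem n q y a' S' : S' \in (sucb n q).2 y a' <->
  a' <> alpha /\ ((cnd n q.1 y a' /\ S' = sfs q.2) \/
    (a' = Order.bottom /\ cnd n q.1 y alpha /\ S' = sfs q.2 `|` [fset iot n y])).
Proof.
rewrite /=; case: (a' =P alpha) => [E|Na].
  by rewrite in_fset0; split=> // [[]].
case: (a' =P Order.bottom) => [E|Nb].
  subst a'; rewrite in_fsetU; split.
    case/orP; case: ifP => Hc; rewrite ?in_fset1 ?in_fset0 // => /eqP ->; split => //;
      first [by left | by right].
  by case=> _ [[Hc ->]|[_ [Hc ->]]]; rewrite Hc in_fset1 eqxx ?orbT.
case: (cnd n q.1 y a'); rewrite ?in_fset1 ?in_fset0; split.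
- by move=> /eqP ->; split=> //; left.
- by case=> _ [[_ ->]|[E _]] //; rewrite eqxx.
- by [].
- by case=> _ [[? _]|[E _]].
Qed.

Lemma Nb0 : Order.bottom <> alpha.
Proof. by move=> E; apply: halpha. Qed.

Lemma sstar_cnd n a (Th : seq C) y a' S : sstar (sb (p n) a Th).2 (tau n) y a' S <-> S = sfs Th /\ cnd n a y a'.
Proof.
rewrite sstar_sb; split.
  by move=> [-> [cc [H1 H2]]]; split=> //; apply/cndP; exists cc.
by move=> [-> /cndP [cc [H1 H2]]]; split=> //; exists cc.
Qed.

Lemma succ_sb n q : (k 0 <= n)%N -> fresh n q.2 ->
  succ_step alpha (tau n) (sb (p n) q.1 q.2) (sucb n q).
Proof.
move=> H0 Hf.
have De : forall y, (y \in mcod (tau n) /\ exists S, sstar (sb (p n) q.1 q.2).2 (tau n) y alpha S)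
   <-> (y \in mcod (tau n) /\ cnd n q.1 y alpha).
  move=> y; split; first by move=> [Hy [S /sstar_cnd [_ Hc]]].
  by move=> [Hy Hc]; split=> //; exists (sfs q.2); apply/sstar_cnd.
exists q.2, (Tho n q.1), (iot n).
split.
  split; first exact: subseq_refl.
  move=> g; split.
    move=> Hg; exists (p n.+1), (Order.join q.1 (c n)), (sfs q.2); rewrite sfsE; split=> //.
    by apply/sstar_cnd; split=> //; apply/cndP; exists (c n); split=> //; apply: edge.
  by move=> [y [a' [S [/sstar_cnd [-> _] Hg]]]]; rewrite sfsE in Hg.
split; first exact: Tho_uniq.
split; first by move=> g /Tho_mem [y [_ _ ->]]; apply: iot_fresh.
split; first by move=> y /De [Hy Hc]; apply/Tho_mem; exists y.
split; first by move=> y y' /De [Hy _] /De [Hy' _]; apply: iot_inj.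
split; first by move=> g /Tho_mem [y [Hy Hc ->]]; exists y; split=> //; apply/De.
split; first by [].
split; first by move=> y /=; rewrite eqxx.
split.
  move=> y S; rewrite sucb_mem; split.
    case=> _ [[Hc ->]|[_ [Hc ->]]]; [left | right]; first by apply/sstar_cnd.
    by exists (sfs q.2); split=> //; apply/sstar_cnd.
  case=> [/sstar_cnd [-> Hc]|[S0 [/sstar_cnd [-> Hc] ->]]]; split; try exact: Nb0.
    by left.
  by right.
move=> y a S Hb Ha; rewrite sucb_mem; split.
  by case=> _ [[Hc ->]|[E _]] //; apply/sstar_cnd.
by move=> /sstar_cnd [-> Hc]; split=> //; left.
Qed.

Definition addb j (q : A * seq C) : bool := Order.join q.1 (c (k 0 + j)) == alpha.
Definition pre j (q : A * seq C) : A * seq C :=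
  if addb j q then (Order.bottom, q.2 ++ [:: iot (k 0 + j) (p (k 0 + j).+1)])
  else (Order.join q.1 (c (k 0 + j)), q.2).
Definition nr (Th : seq C) := if size Th == 2 then take 1 Th else Th.
Fixpoint st j : A * seq C :=
  match j with 0 => (Order.bottom, [::]) | j'.+1 => ((pre j' (st j')).1, nr (pre j' (st j')).2) end.

Definition inv n (q : A * seq C) := [/\ uniq q.2, (size q.2 <= 1)%N, fresh n q.2 & (q.1 <= alpha)%O].

Lemma pre_inv j q : inv (k 0 + j) q ->
  [/\ uniq (pre j q).2, (size (pre j q).2 <= 2)%N, fresh (k 0 + j).+1 (pre j q).2 & ((pre j q).1 <= alpha)%O].
Proof.
case=> u sz fr le; rewrite /pre; case: ifP => Ha /=.
  split.
  - by rewrite cat_uniq u /= andbT orbF iot_fresh.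
  - by rewrite size_cat /=; lia.
  - move=> g; rewrite mem_cat inE; case/orP => [/fr [m [i [lt E]]]|/eqP ->].
      by exists m, i; split=> //; apply: ltnW.
    by exists (k 0 + j)%N, (index (p (k 0 + j).+1) (enum_fset (mcod (tau (k 0 + j))))).
  - exact: le0x.
split=> //; first by lia.
- by move=> g /fr [m [i [lt E]]]; exists m, i; split=> //; apply: ltnW.
- rewrite leUx le /=; apply: c_le; exact: leq_addr.
Qed.

Lemma st_inv j : inv (k 0 + j) (st j).
Proof.
elim: j => [|j IH]; first by split=> //; exact: le0x.
have [u sz fr le] := pre_inv IH.
rewrite /= /nr; case: ifP => Hsz.
  split.
  - exact: subseq_uniq (take_subseq _ _) u.
  - by rewrite size_take (eqP Hsz).
  - rewrite addnS => g Hg; apply: fr; exact: mem_subseq (take_subseq _ _) _ Hg.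
  - exact: le.
split=> //=; first by move/negbT: Hsz; lia.
by rewrite addnS.
Qed.

Lemma cnd_mcod n a y a' : cnd n a y a' -> y \in mcod (tau n).
Proof. by move/cndP => [cc [H _]]; have [] := wf H. Qed.

Lemma sfsU (Th : seq C) g : sfs (Th ++ [:: g]) = sfs Th `|` [fset g].
Proof. by apply/fsetP=> z; rewrite in_fsetU in_fset1 !sfsE mem_cat inE. Qed.

Lemma sucb_board n q : (k 0 <= n)%N -> uniq q.2 -> fresh n q.2 ->
  is_board (mcod (tau n)) (sucb n q).
Proof.
move=> H0 u fr.
have Hy : forall y a' S', S' \in (sucb n q).2 y a' -> y \in mcod (tau n).
  by move=> y a' S' /sucb_mem [_ [[Hc _]|[_ [Hc _]]]]; apply: cnd_mcod Hc.
split.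
  rewrite cat_uniq u Tho_uniq andbT /=; apply/hasPn => g /Tho_mem [y [_ _ ->]].
  exact: iot_fresh.
split.
  move=> y a' yX; apply/fsetP=> S'; rewrite in_fset0; apply/negP => /Hy.
  by rewrite (negbTE yX).
split.
  move=> y a' S' /sucb_mem [_ [[_ ->]|[_ [Hc ->]]]] g; rewrite /= mem_cat ?sfsE.
    by move=> ->.
  rewrite in_fsetU sfsE in_fset1; case/orP=> [->//|/eqP ->].
  by apply/orP; right; apply/Tho_mem; exists y; split=> //; apply: cnd_mcod Hc.
move=> g; rewrite /= mem_cat; case/orP => Hg.
  have He := edge H0.
  case: (boolP (Order.join q.1 (c n) == alpha)) => Ha.
    exists (p n.+1), Order.bottom, (sfs q.2 `|` [fset iot n (p n.+1)]); split.
      apply/sucb_mem; split; first exact: Nb0.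
      by right; split=> //; split=> //; apply/cndP; exists (c n); split=> //; apply/eqP.
    by rewrite in_fsetU sfsE Hg.
  exists (p n.+1), (Order.join q.1 (c n)), (sfs q.2); split; last by rewrite sfsE.
  apply/sucb_mem; split; first by apply/eqP.
  by left; split=> //; apply/cndP; exists (c n).
move: Hg => /Tho_mem [y [Hym Hc ->]].
exists y, Order.bottom, (sfs q.2 `|` [fset iot n y]); split.
  by apply/sucb_mem; split; [exact: Nb0 | right].
by rewrite in_fsetU in_fset1 eqxx orbT.
Qed.

Definition Bn n := if (n < k 0)%N then eb A U C else sb (p n) (st (n - k 0)).1 (st (n - k 0)).2.
Definition Sn n := if (n < k 0)%N then eb A U C else sucb n (st (n - k 0)).
Definition Wn n := if (n < k 0)%N then eb A U C else
  sb (p n.+1) (pre (n - k 0) (st (n - k 0))).1 (pre (n - k 0) (st (n - k 0))).2.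

Lemma inv_n n : (k 0 <= n)%N -> inv n (st (n - k 0)).
Proof. by move=> H; have := st_inv (n - k 0); rewrite subnKC. Qed.

Lemma Bn_board n : is_board (mdom (tau n)) (Bn n).
Proof.
rewrite /Bn; case: ltnP => H; first exact: eb_board.
have [u _ _ _] := inv_n H.
by apply: sb_board => //; have [] := wf (edge H).
Qed.

Lemma Sn_board n : is_board (mcod (tau n)) (Sn n).
Proof.
rewrite /Sn; case: ltnP => H; first exact: eb_board.
have [u _ fr _] := inv_n H.
exact: sucb_board.
Qed.

Lemma Wn_board n : is_board (mcod (tau n)) (Wn n).
Proof.
rewrite /Wn; case: ltnP => H; first exact: eb_board.
have [u _ _ _] := pre_inv (st_inv (n - k 0)).
by apply: sb_board => //; have [] := wf (edge H).
Qed.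

Lemma step_succ n : succ_step alpha (tau n) (Bn n) (Sn n).
Proof.
rewrite /Bn /Sn; case: ltnP => H; first by apply: succ_eb; exact: (emb 0).
have [_ _ fr _] := inv_n H.
exact: succ_sb.
Qed.

Lemma step_weak n : weak_step (Sn n) (Wn n).
Proof.
rewrite /Sn /Wn; case: ltnP => H; first exact: weak_eb.
set j := (n - k 0)%N; set q := st j.
have Ej : (k 0 + j)%N = n by rewrite subnKC.
have He := edge H.
split.
  move=> y a''; apply/fsubsetP => S'; rewrite sb_mem => /and3P [/eqP -> /eqP -> /eqP ->].
  apply/sucb_mem; rewrite /pre /addb Ej; case: ifP => Ha /=.
    split; first exact: Nb0.
    right; split=> //; split; last exact: sfsU.
    by apply/cndP; exists (c n); split=> //; apply/eqP.
  split; first by apply/eqP; rewrite Ha.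
  by left; split=> //; apply/cndP; exists (c n).
split.
  rewrite /pre /addb Ej; case: ifP => Ha /=; last exact: prefix_subseq.
  apply: cat_subseq; first exact: subseq_refl.
  rewrite sub1seq; apply/Tho_mem; exists (p n.+1); split=> //; first by have [] := wf He.
  by apply/cndP; exists (c n); split=> //; apply/eqP.
by move=> g; split; move/occurs_sb.
Qed.

Lemma step_last n : weak_step (Wn n) (Bn n.+1) \/ pop_step (Wn n) (Bn n.+1) \/
  exists g, g \in (Wn n).1 /\ reset_step g (Wn n) (Bn n.+1).
Proof.
rewrite /Wn /Bn; case: (ltnP n (k 0)) => H.
  case: (ltnP n.+1 (k 0)) => H1; first by left; exact: weak_eb.
  have E : n.+1 = k 0 by apply/eqP; rewrite eqn_leq H1 H.
  by right; left; rewrite E subnn /=; exact: pop_eb.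
rewrite ltnNge (leqW H) /= subSn //=.
set q1 := pre (n - k 0) (st (n - k 0)).
rewrite /nr; case: ifP => Hsz; last by left; exact: weak_sb.
have [u _ _ _] := pre_inv (st_inv (n - k 0)).
move: Hsz u; rewrite -/q1; case: q1.2 => [|g0 [|g1 [|g2 l]]] //= _.
rewrite inE andbT => ng; right; right; exists g0; split; first exact: mem_head.
exact: reset_sb.
Qed.

Lemma add_inf m : exists j, (m <= j)%N /\ addb j (st j).
Proof.
apply: NNPP => Hno.
have Hno' : forall j, (m <= j)%N -> ~~ addb j (st j).
  by move=> j Hj; apply/negP => Ha; apply: Hno; exists j.
set i := m.
have Hki : (k 0 + i <= k i)%N := k_ge i.
set j0 := (k i - k 0)%N.
have Ej0 : (k 0 + j0)%N = k i by rewrite subnKC //; lia.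
have Hj0 : (m <= j0)%N by rewrite /j0; lia.
have Hlab : forall l, (l <= len i)%N ->
    (st (j0 + l)).1 = Order.join (st j0).1 (bjoin l (FG i).2).
  elim=> [|l IH] Hl.
    by rewrite addn0 /bjoin big_ord0 joinx0.
  rewrite addnS /= /pre.
  have Hn := Hno' (j0 + l)%N (leq_trans Hj0 (leq_addr _ _)).
  rewrite (negbTE Hn) /= IH; last by lia.
  rewrite addnA Ej0.
  have [_ ->] := pc_seg (ltnW Hl).
  by rewrite /bjoin big_ord_recr /= joinA.
have Hl := Hlab (len i) (leqnn _).
have := Hno' (j0 + len i)%N (leq_trans Hj0 (leq_addr _ _)).
rewrite /addb Hl addnA Ej0.
have [_ ->] := pc_seg (leqnn (len i)).
have [_ [_ [_ Ea]]] := FGP i.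
rewrite -joinA.
have -> : Order.join (bjoin (len i) (FG i).2) ((FG i).2 (len i)) = alpha.
  by rewrite Ea /bjoin big_ord_recr.
have [_ _ _ le] := st_inv j0.
by rewrite (join_r le) eqxx.
Qed.

Lemma st_ne j : addb j (st j) -> (st j.+1).2 != [::].
Proof.
move=> Ha; rewrite /= /pre Ha /= /nr; case: ifP => Hz.
  by case: (st j).2 Hz => [|x l] //=.
by case: (st j).2.
Qed.

Lemma st_stable j : (st j).2 != [::] -> (st j.+1).2 = (st j).2.
Proof.
have [_ sz _ _] := st_inv j.
move: sz; rewrite /= /pre /nr; case: (st j).2 => [|g [|g' l]] //= _ _.
by case: (addb j (st j)).
Qed.

Definition bR (t : nat) : board A U C :=
  match (t %% 3)%N with 0 => Bn (t %/ 3) | 1 => Sn (t %/ 3) | _ => Wn (t %/ 3) end.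
Definition XR t := if (t %% 3 == 0)%N then mdom (tau (t %/ 3)) else mcod (tau (t %/ 3)).
Definition ioR n := (n * 3)%N.

Lemma dm n r : (r < 3)%N -> (n * 3 + r) %/ 3 = n /\ (n * 3 + r) %% 3 = r.
Proof. by move=> h; rewrite divnMDl // modnMDl modn_small // divn_small // addn0. Qed.

Lemma bR0 n : bR (n * 3) = Bn n /\ XR (n * 3) = mdom (tau n).
Proof. by have [E1 E2] := dm n (r := 0) isT; rewrite addn0 in E1 E2; rewrite /bR /XR E1 E2. Qed.
Lemma bR1 n : bR (n * 3).+1 = Sn n /\ XR (n * 3).+1 = mcod (tau n).
Proof. by have [E1 E2] := dm n (r := 1) isT; rewrite addn1 in E1 E2; rewrite /bR /XR E1 E2. Qed.
Lemma bR2 n : bR (n * 3).+2 = Wn n /\ XR (n * 3).+2 = mcod (tau n).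
Proof. by have [E1 E2] := dm n (r := 2) isT; rewrite addn2 in E1 E2; rewrite /bR /XR E1 E2. Qed.

Lemma decomp t : exists n r, (r < 3)%N /\ t = (n * 3 + r)%N.
Proof. by exists (t %/ 3), (t %% 3); split; [rewrite ltn_pmod | exact: divn_eq]. Qed.

Lemma runR : is_run alpha tau bR ioR XR.
Proof.
split; first by move=> n; rewrite /ioR; lia.
split.
  move=> t; have [n [r [hr ->]]] := decomp t.
  case: r hr => [|[|[|r]]] // _.
  - by rewrite addn0; have [-> ->] := bR0 n; apply: Bn_board.
  - by rewrite addn1; have [-> ->] := bR1 n; apply: Sn_board.
  - by rewrite addn2; have [-> ->] := bR2 n; apply: Wn_board.
split.
  move=> n; rewrite /ioR; have [E1 E2] := bR0 n; have [E3 E4] := bR1 n.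
  by rewrite E1 E2 E3 E4; split=> //; split=> //; apply: step_succ.
move=> t Hno; have [n [r [hr Et]]] := decomp t.
case: r hr Et => [|[|[|r]]] // _ Et.
- by exfalso; apply: (Hno n); rewrite Et addn0.
- rewrite Et addn1; have [E1 E2] := bR1 n; have [E3 E4] := bR2 n.
  rewrite E1 E2 E3 E4; split=> //; left; exact: step_weak.
- rewrite Et addn2.
  have [E3 E4] := bR2 n.
  have E5 : (n * 3).+3 = (n.+1 * 3)%N by rewrite mulSn; lia.
  have [E1 E2] := bR0 n.+1.
  rewrite E5 E1 E2 E3 E4 -(HD n); split=> //.
  exact: step_last.
Qed.

Lemma accR : accepting bR ioR.
Proof.
have [j1 [_ Ha1]] := add_inf 0.
set j0 := j1.+1.
have Hne : (st j0).2 != [::] := st_ne Ha1.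
set gam := head (emb 0) (st j0).2.
have Eg : (st j0).2 = [:: gam].
  have [_ sz _ _] := st_inv j0.
  by move: Hne sz; rewrite /gam; case: (st j0).2 => [|x [|y l]].
have Hg : forall j, (j0 <= j)%N -> (st j).2 = [:: gam].
  move=> j Hj; rewrite -(subnKC Hj); elim: (j - j0)%N => [|d IH]; first by rewrite addn0.
  by rewrite addnS st_stable IH.
have Hgn : forall n, (k 0 + j0 <= n)%N -> ~~ (n < k 0)%N /\ (st (n - k 0)).2 = [:: gam].
  move=> n Hn; split; first by rewrite -leqNgt; lia.
  by apply: Hg; lia.
exists ((k 0 + j0) * 3)%N, gam; split.
  move=> t Ht; have [n [r [hr Et]]] := decomp t.
  have Hn : (k 0 + j0 <= n)%N by lia.
  have [Hlt Hsn] := Hgn n Hn.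
  case: r hr Et => [|[|[|r]]] // _ ->.
  - by rewrite addn0; have [-> _] := bR0 n; rewrite /Bn (negbTE Hlt) /= Hsn mem_head.
  - by rewrite addn1; have [-> _] := bR1 n; rewrite /Sn (negbTE Hlt) /= mem_cat Hsn mem_head.
  - rewrite addn2; have [-> _] := bR2 n; rewrite /Wn (negbTE Hlt) /= /pre.
    by case: ifP => _ /=; rewrite Hsn ?mem_head.
move=> m.
have [j [Hj Ha]] := add_inf (maxn m j0).
have Hj0 : (j0 <= j)%N by apply: leq_trans Hj; rewrite leq_maxr.
have Hmj : (m <= j)%N by apply: leq_trans Hj; rewrite leq_maxl.
set n := (k 0 + j)%N.
exists (n * 3).+2; split; first by rewrite /n; lia.
split; first by move=> n' ; rewrite /ioR; lia.
have [-> _] := bR2 n.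
have E5 : (n * 3).+3 = (n.+1 * 3)%N by rewrite mulSn; lia.
rewrite E5; have [-> _] := bR0 n.+1.
have Hn1 : ~~ (n < k 0)%N by rewrite -leqNgt /n leq_addr.
have Hn2 : ~~ (n.+1 < k 0)%N by rewrite -leqNgt /n; lia.
rewrite /Wn /Bn (negbTE Hn1) (negbTE Hn2) /= subSn ?leq_addr // /n addKn /=.
have [u _ _ _] := pre_inv (st_inv j).
move: u; rewrite /nr /pre Ha (Hg j Hj0) /= inE andbT => ng.
exact: reset_sb.
Qed.
End Compl.

Lemma completeness (disp : Order.disp_t) (A : finTBLatticeType disp)
  (alpha : A) (halpha : alpha <> Order.bottom)
  (U : choiceType) (C : countType) (emb : nat -> C) (emb_inj : injective emb)
  (M : {fset mor A U}) (hM : forall m, m \in M -> wf_mor m)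
  (tau : nat -> mor A U) (htau : forall n, tau n \in M) :
  describes_path tau /\ trace_condition alpha tau -> has_accepting_run alpha C tau.
Proof.
case=> HD [k [s [Hk [Hs HP]]]].
have H1 := runR halpha emb_inj hM htau HD Hk HP.
have H2 : accepting (bR emb Hk HP) ioR by apply: accR.
by do 3 eexists; split; [exact: H1 | exact: H2].
Qed.

Theorem mainTheorem4 (disp : Order.disp_t) (A : finTBLatticeType disp)
  (alpha : A) (halpha : alpha <> Order.bottom)
  (U : choiceType) (C : countType) (emb : nat -> C) (emb_inj : injective emb)
  (M : {fset mor A U}) (hM : forall m, m \in M -> wf_mor m)
  (tau : nat -> mor A U) (htau : forall n, tau n \in M) :
  has_accepting_run alpha C tau <->
  (describes_path tau /\ trace_condition alpha tau).
Proof.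
split.
  exact: (soundness halpha hM htau).
exact: (completeness halpha emb_inj hM htau).
Qed.
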